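(* If $2\le n\le5$, then $\Gamma=\mathrm{Q}$. If $n=6$, then $\Gamma\ne\mathrm{Q}$.
   Context: Let $\mathrm{C}$ be either the real Clifford algebra $C\ell_{p,q}$ with $p+q=n$, or the complex Clifford algebra $C\ell(\mathbb{C}^n)$. It has identity $e$ and generators $e_1,\dots,e_n$ satisfying $e_ae_b+e_be_a=2\eta_{ab}e$. In the real case $\eta=\mathrm{diag}(1,\dots,1,-1,\dots,-1)$ with $p$ entries $+1$ and $q$ entries $-1$. In the complex case $\eta=I_n$. $\mathrm{C}^k$ is the grade-$k$ subspace, spanned by the products $e_{a_1}\cdots e_{a_k}$ with $a_1<\dots<a_k$. The even subspace is $\mathrm{C}^{(0)}=\bigoplus_{k\text{ even}}\mathrm{C}^k$ and the odd subspace is $\mathrm{C}^{(1)}=\bigoplus_{k\text{ odd}}\mathrm{C}^k$. The reversion $U\mapsto\tilde U$ is the linear anti-automorphism acting on $\mathrm{C}^k$ as $(-1)^{k(k-1)/2}$. For $S\subseteq\mathrm{C}$, $S^\times$ is the set of elements of $S$ invertible in $\mathrm{C}$, and $\mathrm{C}^{\times(j)}:=(\mathrm{C}^{(j)})^\times$. $\mathrm{Z}$ is the center: $\mathrm{Z}=\mathrm{C}^0$ for $n$ even and $\mathrm{Z}=\mathrm{C}^0\oplus\mathrm{C}^n$ for $n$ odd. Define: <ul> <li>the Clifford group $\Gamma=\{T\in\mathrm{C}^\times: T\,\mathrm{C}^1\,T^{-1}\subseteq\mathrm{C}^1\}$;</li> <li>$\mathrm{P}:=\mathrm{Z}^\times(\mathrm{C}^{\times(0)}\cup\mathrm{C}^{\times(1)})=\{WT: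 W\in\mathrm{Z}^\times, T\in\mathrm{C}^{\times(0)}\cup\mathrm{C}^{\times(1)}\}$;</li> <li>$\mathrm{Q}:=\{T\in\mathrm{P}:\tilde TT\in\mathrm{Z}^\times\}$.</li> </ul> *)

(* Defs.v *)
(* Concrete model of the Clifford algebra with a diagonal
   metric: an element is a finite function from subsets A of {0,..,n-1}
   (the basis blades e_A = e_{a_1} ... e_{a_k}, a_1 < ... < a_k) to the
   coefficient field. *)
From HB Require Import structures.
From mathcomp Require Import all_boot all_order all_algebra.
From mathcomp Require Import reals.
From mathcomp Require Import complex.
Set Implicit Arguments. Unset Strict Implicit. Unset Printing Implicit Defensive.
Import Order.TTheory GRing.Theory Num.Theory.
Local Open Scope ring_scope.

Section Clifford.
Variables (F : fieldType) (n : nat) (eta : 'I_n -> F).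

Definition clif := {ffun {set 'I_n} -> F}.

(* e_A e_B = bsgn A B * (prod_{i in A /\ B} eta_i) e_{A symdiff B};
   the sign counts the transpositions needed to sort the concatenation *)
Definition bsgn (A B : {set 'I_n}) : F :=
  (-1) ^+ #|[set ab : 'I_n * 'I_n | [&& ab.1 \in A, ab.2 \in B & (ab.2 < ab.1)%N]]|.

Definition symd (A B : {set 'I_n}) : {set 'I_n} := (A :\: B) :|: (B :\: A).

Definition cmul (x y : clif) : clif :=
  [ffun C => \sum_(A : {set 'I_n}) \sum_(B : {set 'I_n} | symd A B == C)
      x A * y B * bsgn A B * \prod_(i in A :&: B) eta i].

Definition cone : clif := [ffun A : {set 'I_n} => if A == set0 then 1 else 0].

Definition cinv_of (T U : clif) : Prop := cmul T U = cone /\ cmul U T = cone.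
Definition cunit (T : clif) : Prop := exists U, cinv_of T U.

Definition grade (k : nat) (x : clif) : Prop := forall A : {set 'I_n}, #|A| != k -> x A = 0.
Definition even_part (x : clif) : Prop := forall A : {set 'I_n}, odd #|A| -> x A = 0.
Definition odd_part (x : clif) : Prop := forall A : {set 'I_n}, ~~ odd #|A| -> x A = 0.

Definition center (x : clif) : Prop := forall y, cmul x y = cmul y x.

Definition crev (x : clif) : clif := [ffun A : {set 'I_n} => (-1) ^+ 'C(#|A|, 2) * x A].

Definition Gamma (T : clif) : Prop :=
  exists U, cinv_of T U /\ forall v, grade 1 v -> grade 1 (cmul (cmul T v) U).

Definition Pset (T : clif) : Prop :=
  exists W S, [/\ center W, cunit W,
                  cunit S /\ (even_part S \/ odd_part S) & T = cmul W S].

Definition Qset (T : clif) : Prop :=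
  Pset T /\ (center (cmul (crev T) T) /\ cunit (cmul (crev T) T)).

End Clifford.

Definition eta_pq (R : realType) (p q : nat) (i : 'I_(p + q)) : R :=
  if (i < p)%N then 1 else -1.

Definition eta_C (R : realType) (n : nat) (i : 'I_n) : R[i] := 1.

(* Main.v *)
Require Import Defs.
From HB Require Import structures.
From mathcomp Require Import all_boot all_order all_algebra.
From mathcomp Require Import reals.
From mathcomp Require Import complex.
From mathcomp Require Import ring.
Set Implicit Arguments. Unset Strict Implicit. Unset Printing Implicit Defensive.
Import GRing.Theory Num.Theory.
Local Open Scope ring_scope.

Module P1.


Section Clif.
Variables (F : numFieldType) (n : nat) (eta : 'I_n -> F).
Local Notation set := {set 'I_n}.
Implicit Types X Y Z C : {set 'I_n}.

Definition cla (e : 'I_n -> F) : predArgType := clif F n.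
HB.instance Definition _ := GRing.Zmodule.on (cla eta).
HB.instance Definition _ := GRing.Lmodule.copy (cla eta) {ffun {set 'I_n} -> F^o}.
Local Notation A := (cla eta).

Definition sgp (a b : 'I_n) : F := if (b < a)%N then -1 else 1.
Definition sg (A B : set) : F := \prod_(a in A) \prod_(b in B) sgp a b.

Lemma sgp2 a b : sgp a b * sgp a b = 1.
Proof. by rewrite /sgp; case: ifP; rewrite ?mulr1 ?mulrNN ?mulr1. Qed.

Lemma bsgnE (X Y : set) : bsgn F X Y = sg X Y.
Proof.
rewrite /bsgn -prodr_const.
rewrite (eq_bigl (fun p : 'I_n*'I_n => (p.1 \in X) && ((p.2 \in Y) && (p.2 < p.1)%N))); last first.
  by move=> p; rewrite inE.
rewrite -(pair_big_dep (fun a => a \in X) (fun a b => (b \in Y) && (b < a)%N) (fun _ _ => -1)) /=.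
rewrite /sg; apply: eq_bigr => a _.
rewrite (big_mkcond (fun b => _ && _)) (big_mkcond (fun b => b \in Y)) /=.
apply: eq_bigr => b _; rewrite /sgp.
by case: (b \in Y); case: (b < a)%N.
Qed.

Lemma prod_symd (f : 'I_n -> F) (X Y : set) : (forall i, f i * f i = 1) ->
  \prod_(i in symd X Y) f i = \prod_(i in X) f i * \prod_(i in Y) f i.
Proof.
move=> f2; rewrite !(big_mkcond (fun i => i \in _)) -big_split /=.
apply: eq_bigr => i _; rewrite /symd !inE.
by case: (i \in X); case: (i \in Y); rewrite /= ?mulr1 ?mul1r ?f2.
Qed.

Lemma sg_symdl X Y Z : sg (symd X Y) Z = sg X Z * sg Y Z.
Proof.
apply: prod_symd => a; rewrite -big_split /=; apply: big1 => b _; exact: sgp2.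
Qed.

Lemma sg_symdr X Y Z : sg X (symd Y Z) = sg X Y * sg X Z.
Proof.
rewrite /sg -big_split /=; apply: eq_bigr => a _; apply: prod_symd => b; exact: sgp2.
Qed.

Definition ep (S : set) : F := \prod_(i in S) eta i.

Lemma ep_assoc X Y Z :
  ep (X :&: Y) * ep (symd X Y :&: Z) = ep (Y :&: Z) * ep (X :&: symd Y Z).
Proof.
rewrite /ep !(big_mkcond (fun i => i \in _)) -!big_split /=.
apply: eq_bigr => i _; rewrite /symd !inE.
by case: (i \in X); case: (i \in Y); case: (i \in Z); rewrite /= ?mulr1 ?mul1r.
Qed.

Definition cc X Y := sg X Y * ep (X :&: Y).

Lemma cc_assoc X Y Z : cc X Y * cc (symd X Y) Z = cc Y Z * cc X (symd Y Z).
Proof.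
have E := ep_assoc X Y Z.
rewrite /cc sg_symdl sg_symdr.
transitivity (sg X Y * sg X Z * sg Y Z * (ep (X:&:Y) * ep (symd X Y :&: Z))); first ring.
rewrite E; ring.
Qed.

Lemma symdA X Y Z : symd (symd X Y) Z = symd X (symd Y Z).
Proof.
apply/setP => i; rewrite /symd !inE.
by case: (i \in X); case: (i \in Y); case: (i \in Z).
Qed.
Lemma symdC X Y : symd X Y = symd Y X.
Proof. by rewrite /symd setUC. Qed.
Lemma symd0 X : symd X set0 = X.
Proof. by apply/setP => i; rewrite /symd !inE; case: (i \in X). Qed.
Lemma sym0d X : symd set0 X = X.
Proof. by rewrite symdC symd0. Qed.
Lemma symdd X : symd X X = set0.
Proof. by apply/setP => i; rewrite /symd !inE; case: (i \in X). Qed.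
Lemma symdK X Y : symd X (symd X Y) = Y.
Proof. by rewrite -symdA symdd sym0d. Qed.

Definition bl (X : set) : A := [ffun C => (C == X)%:R].

Lemma scal_eq (a b : F) (v : A) : a = b -> a *: v = b *: v.
Proof. by move->. Qed.

Lemma scE (a b : F) : a *: (b : F^o) = a * b. Proof. by []. Qed.

Lemma cmulE (x y : A) :
  cmul eta x y = \sum_(X : set) \sum_(Y : set) (x X * y Y * cc X Y) *: bl (symd X Y).
Proof.
apply/ffunP => C; rewrite !ffunE sum_ffunE; apply: eq_bigr => X _.
rewrite sum_ffunE (big_mkcond (fun Y => symd X Y == C)) /=; apply: eq_bigr => Y _.
rewrite !ffunE scE bsgnE /cc /ep eq_sym.
by case: eqP; rewrite ?mulr1 ?mulr0 -?mulrA.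
Qed.

Lemma bl_expand (x : A) : x = \sum_X x X *: bl X.
Proof.
apply/ffunP => C; rewrite sum_ffunE (bigD1 C) //= big1 => [|X nX].
  by rewrite !ffunE eqxx scE mulr1 addr0.
by rewrite !ffunE scE eq_sym (negbTE nX) mulr0.
Qed.

Lemma cmul_bl_l X (y : A) :
  cmul eta (bl X) y = \sum_Y (y Y * cc X Y) *: bl (symd X Y).
Proof.
rewrite cmulE (bigD1 X) //= [X in _ + X]big1 => [|X' nX'].
  by rewrite addr0; apply: eq_bigr => Y _; rewrite ffunE eqxx mul1r.
by apply: big1 => Y _; rewrite ffunE (negbTE nX') !mul0r scale0r.
Qed.

Lemma cmul_bl_r (x : A) Y :
  cmul eta x (bl Y) = \sum_X (x X * cc X Y) *: bl (symd X Y).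
Proof.
rewrite cmulE; apply: eq_bigr => X _.
rewrite (bigD1 Y) //= big1 => [|Y' nY'].
  by rewrite addr0 ffunE eqxx mulr1.
by rewrite ffunE (negbTE nY') mulr0 mul0r scale0r.
Qed.

Lemma cmul_bl X Y : cmul eta (bl X) (bl Y) = cc X Y *: bl (symd X Y).
Proof.
rewrite cmul_bl_l (bigD1 Y) //= big1 => [|Y' nY'].
  by rewrite addr0 ffunE eqxx mul1r.
by rewrite ffunE (negbTE nY') mul0r scale0r.
Qed.

Lemma cmulDl (x y z : A) : cmul eta (x + y) z = cmul eta x z + cmul eta y z.
Proof.
rewrite !cmulE -big_split; apply: eq_bigr => X _; rewrite -big_split.
by apply: eq_bigr => Y _; rewrite !ffunE !mulrDl scalerDl.
Qed.

Lemma cmulDr (x y z : A) : cmul eta x (y + z) = cmul eta x y + cmul eta x z.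
Proof.
rewrite !cmulE -big_split; apply: eq_bigr => X _; rewrite -big_split.
by apply: eq_bigr => Y _; rewrite !ffunE !mulrDr !mulrDl scalerDl.
Qed.

Lemma cmulZl a (x y : A) : cmul eta (a *: x) y = a *: (cmul eta x y : A).
Proof.
rewrite !cmulE scaler_sumr; apply: eq_bigr => X _; rewrite scaler_sumr.
by apply: eq_bigr => Y _; rewrite !ffunE scE scalerA !mulrA.
Qed.

Lemma cmulZr a (x y : A) : cmul eta x (a *: y) = a *: (cmul eta x y : A).
Proof.
rewrite !cmulE scaler_sumr; apply: eq_bigr => X _; rewrite scaler_sumr.
by apply: eq_bigr => Y _; rewrite !ffunE scE scalerA [x X * _]mulrCA -!mulrA.
Qed.

Lemma cmul0l (y : A) : cmul eta 0 y = 0.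
Proof. by rewrite -[X in cmul _ X _](scale0r (0 : A)) cmulZl scale0r. Qed.
Lemma cmul0r (y : A) : cmul eta y 0 = 0.
Proof. by rewrite -[X in cmul _ _ X](scale0r (0 : A)) cmulZr scale0r. Qed.

Lemma cmul_suml I (r : seq I) (P : pred I) (f : I -> A) z :
  cmul eta (\sum_(i <- r | P i) f i) z = \sum_(i <- r | P i) cmul eta (f i) z.
Proof. exact: (big_morph (fun u => cmul eta u z) (fun u v => cmulDl u v z) (cmul0l z)). Qed.

Lemma cmul_sumr I (r : seq I) (P : pred I) (f : I -> A) z :
  cmul eta z (\sum_(i <- r | P i) f i) = \sum_(i <- r | P i) cmul eta z (f i).
Proof. exact: (big_morph (fun u => cmul eta z u) (fun u v => cmulDr z u v) (cmul0r z)). Qed.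

Lemma cmulA (x y z : A) : cmul eta (cmul eta x y) z = cmul eta x (cmul eta y z).
Proof.
transitivity (\sum_X \sum_Y \sum_Z
   (x X * y Y * z Z * (cc X Y * cc (symd X Y) Z)) *: bl (symd (symd X Y) Z)).
  rewrite [cmul eta x y]cmulE cmul_suml; apply: eq_bigr => X _.
  rewrite cmul_suml; apply: eq_bigr => Y _.
  rewrite cmulZl cmul_bl_l scaler_sumr; apply: eq_bigr => Z _.
  by rewrite scalerA; apply: scal_eq; ring.
symmetry.
transitivity (\sum_Y \sum_Z \sum_X
   (x X * y Y * z Z * (cc X Y * cc (symd X Y) Z)) *: bl (symd (symd X Y) Z)).
  rewrite [cmul eta y z]cmulE cmul_sumr; apply: eq_bigr => Y _.
  rewrite cmul_sumr; apply: eq_bigr => Z _.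
  rewrite cmulZr cmul_bl_r scaler_sumr; apply: eq_bigr => X _.
  by rewrite scalerA symdA; apply: scal_eq; rewrite cc_assoc; ring.
under eq_bigr do rewrite exchange_big.
by rewrite exchange_big.
Qed.

Lemma cc0l Y : cc set0 Y = 1.
Proof. by rewrite /cc /sg /ep set0I !big_set0 mulr1. Qed.
Lemma cc0r X : cc X set0 = 1.
Proof.
rewrite /cc /sg /ep setI0 big_set0 mulr1; apply: big1 => a _; exact: big_set0.
Qed.

Lemma cmul1l (y : A) : cmul eta (bl set0) y = y.
Proof.
rewrite cmul_bl_l [RHS]bl_expand; apply: eq_bigr => Y _.
by rewrite cc0l mulr1 sym0d.
Qed.

Lemma cmul1r (y : A) : cmul eta y (bl set0) = y.
Proof.
rewrite cmul_bl_r [RHS]bl_expand; apply: eq_bigr => Y _.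
by rewrite cc0r mulr1 symd0.
Qed.

Lemma bl0_neq0 : bl set0 != 0 :> A.
Proof. by apply/eqP => /ffunP/(_ set0); rewrite !ffunE eqxx => /eqP; rewrite oner_eq0. Qed.

Definition amul (x y : A) : A := cmul eta x y.
Fact amulA : associative amul. Proof. move=> x y z; exact (esym (cmulA x y z)). Qed.
Fact amul1l : left_id (bl set0) amul. Proof. move=> x; exact (cmul1l x). Qed.
Fact amul1r : right_id (bl set0) amul. Proof. move=> x; exact (cmul1r x). Qed.
Fact amulDl : left_distributive amul +%R. Proof. move=> x y z; exact (cmulDl x y z). Qed.
Fact amulDr : right_distributive amul +%R. Proof. move=> x y z; exact (cmulDr x y z). Qed.
HB.instance Definition _ := GRing.Zmodule_isNzRing.Build A
  amulA amul1l amul1r amulDl amulDr bl0_neq0.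
HB.instance Definition _ := GRing.Lmodule_isLalgebra.Build F A
  (fun a (x y : A) => esym (cmulZl a x y)).
HB.instance Definition _ := GRing.Lalgebra_isAlgebra.Build F A
  (fun a (x y : A) => esym (cmulZr a x y)).

Lemma mulE (x y : A) : x * y = cmul eta x y. Proof. by []. Qed.
Lemma oneE : (1 : A) = bl set0. Proof. by []. Qed.
Lemma coneE : cone F n = bl set0.
Proof. by apply/ffunP => C; rewrite !ffunE; case: eqP. Qed.

End Clif.

End P1.
Import P1.

Module P2.


Section S2.
Variables (F : numFieldType) (n : nat) (eta : 'I_n -> F).
Hypothesis eta2 : forall i, eta i * eta i = 1.
Local Notation A := (cla eta).
Local Notation e := (bl eta).
Local Notation sg := (sg F).
Implicit Types X Y Z C D : {set 'I_n}.
Implicit Types x y z : A.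

Lemma blM X Y : e X * e Y = cc eta X Y *: e (symd X Y).
Proof. exact: cmul_bl. Qed.

Lemma sg_sq X Y : sg X Y * sg X Y = 1.
Proof.
rewrite /P1.sg -big_split; apply: big1 => a _; rewrite -big_split.
by apply: big1 => b _; exact: sgp2.
Qed.

Lemma ep_sq S : ep eta S * ep eta S = 1.
Proof. by rewrite /ep -big_split; apply: big1 => i _; exact: eta2. Qed.

Lemma cc_sq X Y : cc eta X Y * cc eta X Y = 1.
Proof. by rewrite /cc mulrACA sg_sq ep_sq mulr1. Qed.

Lemma cc_neq0 X Y : cc eta X Y != 0.
Proof.
apply/eqP => h; have := cc_sq X Y; rewrite h mul0r => /eqP.
by rewrite eq_sym oner_eq0.
Qed.

Lemma mul_blE X x C : (e X * x) C = cc eta X (symd X C) * x (symd X C).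
Proof.
rewrite mulE cmul_bl_l sum_ffunE (bigD1 (symd X C)) //= big1 => [|Y nY].
  by rewrite !ffunE symdK eqxx scE mulr1 addr0 mulrC.
rewrite !ffunE scE; case: eqP => [hC|]; last by rewrite mulr0.
by move: nY; rewrite hC symdK eqxx.
Qed.

Lemma mul_blE' x Y C : (x * e Y) C = cc eta (symd C Y) Y * x (symd C Y).
Proof.
rewrite mulE cmul_bl_r sum_ffunE (bigD1 (symd C Y)) //= big1 => [|X nX].
  by rewrite !ffunE symdA symdd symd0 eqxx scE mulr1 addr0 mulrC.
rewrite !ffunE scE; case: eqP => [hC|]; last by rewrite mulr0.
by move: nX; rewrite hC symdA symdd symd0 eqxx.
Qed.

Lemma mul0E x y : (x * y) set0 = \sum_X x X * y X * cc eta X X.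
Proof.
rewrite mulE cmulE sum_ffunE; apply: eq_bigr => X _.
rewrite sum_ffunE (bigD1 X) //= big1 => [|Y nY].
  by rewrite !ffunE symdd eqxx scE mulr1 addr0.
rewrite !ffunE scE; case: eqP => [h|]; last by rewrite mulr0.
have YX : Y = X by rewrite -(symdK X Y) -h symd0.
by move: nY; rewrite YX eqxx.
Qed.

Lemma mul0C x y : (x * y) set0 = (y * x) set0.
Proof. by rewrite !mul0E; apply: eq_bigr => X _; rewrite (mulrC (x X)). Qed.

Lemma odd_symd X Y : odd #|symd X Y| = odd #|X| (+) odd #|Y|.
Proof.
rewrite /symd cardsU.
have -> : (X :\: Y) :&: (Y :\: X) = set0.
  by apply/setP => i; rewrite !inE; case: (i \in X); case: (i \in Y).
rewrite cards0 subn0 -(cardsID Y X) -(cardsID X Y) !oddD (setIC Y X).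
by case: (odd #|X :&: Y|); case: (odd #|X :\: Y|); case: (odd #|Y :\: X|).
Qed.

Definition par (b : bool) (x : A) := forall C, odd #|C| != b -> x C = 0.

Lemma par_mul a b x y : par a x -> par b y -> par (a (+) b) (x * y).
Proof.
move=> hx hy C hC; rewrite mulE cmulE sum_ffunE big1 // => X _.
rewrite sum_ffunE big1 // => Y _; rewrite !ffunE scE.
case: eqP => [E|]; last by rewrite mulr0.
case: (eqVneq (odd #|X|) a) => [hX|/hx->]; last by rewrite !mul0r.
case: (eqVneq (odd #|Y|) b) => [hY|/hy->]; last by rewrite mulr0 !mul0r.
by move: hC; rewrite E odd_symd hX hY eqxx.
Qed.

Lemma par_add b x y : par b x -> par b y -> par b (x + y).
Proof. by move=> hx hy C hC; rewrite !ffunE hx ?hy ?addr0. Qed.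
Lemma par_opp b x : par b x -> par b (- x).
Proof. by move=> hx C hC; rewrite !ffunE hx ?oppr0. Qed.
Lemma par_scale b a x : par b x -> par b (a *: x).
Proof. by move=> hx C hC; rewrite !ffunE hx ?scE ?mulr0. Qed.
Lemma par_both x : par false x -> par true x -> x = 0.
Proof.
move=> h0 h1; apply/ffunP => C; rewrite ffunE.
by case: (boolP (odd #|C|)) => h; [apply: h0; rewrite h | apply: h1; rewrite (negbTE h)].
Qed.
Lemma par_one : par false 1.
Proof. by move=> C hC; rewrite oneE ffunE; case: eqP => // E; move: hC; rewrite E cards0. Qed.

Definition evp (b : bool) x : A := [ffun C : {set 'I_n} => if odd #|C| == b then x C else 0].
Lemma evp_par b x : par b (evp b x).
Proof. by move=> C hC; rewrite ffunE (negbTE hC). Qed.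
Lemma evp_split x : x = evp false x + evp true x.
Proof.
apply/ffunP => C; rewrite !ffunE.
by case: (odd #|C|); rewrite ?add0r ?addr0.
Qed.
Lemma evp_id b x : par b x -> evp b x = x.
Proof.
move=> h; apply/ffunP => C; rewrite ffunE; case: eqP => // /eqP hC.
by rewrite h.
Qed.

End S2.

End P2.
Import P2.

Module P3.


Section S2.
Variables (F : numFieldType) (n : nat) (eta : 'I_n -> F).
Hypothesis eta2 : forall i, eta i * eta i = 1.
Local Notation A := (cla eta).
Local Notation e := (bl eta).
Local Notation sg := (sg F).
Implicit Types X Y Z C D : {set 'I_n}.
Implicit Types x y z : A.
Implicit Types i j : 'I_n.


Lemma sgpp (a b : 'I_n) : sgp F a b * sgp F b a = if a == b then 1 else -1.
Proof.
case: (eqVneq a b) => [->|nab]; first by rewrite /sgp ltnn mulr1.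
rewrite /sgp; case: ltngtP => h /=; rewrite ?mulr1 ?mul1r //.
by move: nab; rewrite (val_inj h) eqxx.
Qed.

Lemma sg_pair D i : sg D [set i] * sg [set i] D = \prod_(a in D) (if a == i then 1 else -1).
Proof.
rewrite /P1.sg big_set1 -big_split /=; apply: eq_bigr => a _.
by rewrite big_set1 sgpp.
Qed.

Lemma sg_single i Y : i \notin Y -> sg [set i] Y * sg Y [set i] = (-1) ^+ #|Y|.
Proof.
move=> iY; rewrite mulrC sg_pair -prodr_const; apply: eq_bigr => a aY.
by rewrite ifF //; apply/negbTE; apply: contraNneq iY => <-.
Qed.

Lemma sg11 i : sg [set i] [set i] = 1.
Proof. by rewrite /P1.sg !big_set1 /sgp ltnn. Qed.

Lemma sgXX X : sg X X = (-1) ^+ 'C(#|X|, 2).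
Proof.
move: {2}#|X| (erefl #|X|) => k; elim: k X => [|k IH] X hX.
  have -> : X = set0 by apply/eqP; rewrite -cards_eq0 hX.
  by rewrite /P1.sg big_set0 cards0.
have [i iX] : exists i, i \in X.
  by apply/set0Pn; rewrite -card_gt0 hX.
have hY : #|X :\ i| = k by move: hX; rewrite (cardsD1 i X) iX add1n => -[].
have XE : X = symd (X :\ i) [set i].
  apply/setP => j; rewrite /symd !inE.
  case: (eqVneq j i) => [->|nji]; first by rewrite iX. by case: (j \in X).
rewrite [in LHS]XE sg_symdl !sg_symdr sg11 IH // mulr1 -mulrA [sg (X :\ i) _ * _]mulrC sg_single ?setD11 // hX.
by rewrite hY -exprD binS bin1.
Qed.

Definition rev x : A := crev x.

Lemma revD x y : rev (x + y) = rev x + rev y.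
Proof. by apply/ffunP => C; rewrite !ffunE mulrDr. Qed.
Lemma revZ a x : rev (a *: x) = a *: rev x.
Proof. by apply/ffunP => C; rewrite !ffunE !scE mulrCA. Qed.
Lemma rev0 : rev 0 = 0.
Proof. by apply/ffunP => C; rewrite !ffunE mulr0. Qed.
Lemma revN x : rev (- x) = - rev x.
Proof. by apply/ffunP => C; rewrite !ffunE mulrN. Qed.
Lemma rev_sum I (r : seq I) (P : pred I) (f : I -> A) :
  rev (\sum_(i <- r | P i) f i) = \sum_(i <- r | P i) rev (f i).
Proof. exact: (big_morph rev revD rev0). Qed.

Lemma rev_bl X : rev (e X) = sg X X *: e X.
Proof.
apply/ffunP => C; rewrite !ffunE scE.
by case: eqP => [->|]; rewrite ?mulr0 // sgXX.
Qed.

Lemma rev_mul_bl X Y : rev (e X * e Y) = rev (e Y) * rev (e X).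
Proof.
rewrite blM revZ rev_bl !rev_bl -scalerAl -scalerAr blM !scalerA symdC.
apply: scal_eq.
rewrite /cc sg_symdl !sg_symdr (setIC Y X).
rewrite -[RHS]mul1r -(@sg_sq F n X Y); ring.
Qed.

Lemma mul_sums (a b : {set 'I_n} -> F) (u w : {set 'I_n} -> A) :
  (\sum_X a X *: u X) * (\sum_Y b Y *: w Y) =
  \sum_X \sum_Y (a X * b Y) *: (u X * w Y).
Proof.
rewrite mulr_suml; apply: eq_bigr => X _; rewrite mulr_sumr; apply: eq_bigr => Y _.
by rewrite -scalerAl -scalerAr scalerA.
Qed.

Lemma rev_mul x y : rev (x * y) = rev y * rev x.
Proof.
rewrite [x]bl_expand [y]bl_expand !rev_sum.
under [X in _ = X * _]eq_bigr do rewrite revZ.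
under [X in _ = _ * X]eq_bigr do rewrite revZ.
rewrite mul_sums mul_sums rev_sum.
under eq_bigr do rewrite rev_sum.
rewrite exchange_big; apply: eq_bigr => Y _; apply: eq_bigr => X _.
by rewrite (revZ (x X * y Y) (e X * e Y)) rev_mul_bl mulrC.
Qed.

Lemma rev_rev x : rev (rev x) = x.
Proof.
apply/ffunP => C; rewrite !ffunE mulrA -exprMn mulrNN mulr1 expr1n mul1r.
by [].
Qed.

Lemma rev1 : rev 1 = 1.
Proof. by rewrite oneE rev_bl /P1.sg big_set0 scale1r. Qed.

Lemma rev_par b x : par b x -> par b (rev x).
Proof. by move=> h C hC; rewrite ffunE h ?mulr0. Qed.

End S2.

End P3.
Import P3.

Module P4.


Section S2.
Variables (F : numFieldType) (n : nat) (eta : 'I_n -> F).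
Hypothesis eta2 : forall i, eta i * eta i = 1.
Local Notation A := (cla eta).
Local Notation e := (bl eta).
Local Notation sg := (sg F).
Implicit Types X Y Z C D : {set 'I_n}.
Implicit Types x y z : A.
Implicit Types i j : 'I_n.


Definition central x := forall y, x * y = y * x.

Lemma N1_neq1 : (-1 : F) != 1.
Proof.
apply/eqP => h; have : (1 + 1 : F) = 0 by rewrite -{1}h addNr.
by move/eqP; rewrite -mulr2n pnatr_eq0.
Qed.

Lemma signN1 k : (-1 : F) ^+ k = 1 -> ~~ odd k.
Proof.
rewrite -signr_odd; case: (odd k) => //=; rewrite expr1 => /eqP.
by rewrite (negbTE N1_neq1).
Qed.

Lemma ep_neq0 S : ep eta S != 0.
Proof.
apply/eqP => h; have := ep_sq eta2 S; rewrite h mul0r => /eqP.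
by rewrite eq_sym oner_eq0.
Qed.

Lemma central_vec x : (forall i, x * e [set i] = e [set i] * x) -> central x.
Proof.
move=> hx.
have hb : forall X, x * e X = e X * x.
  move=> X; move: {2}#|X| (erefl #|X|) => k; elim: k X => [|k IH] X hX.
    have -> : X = set0 by apply/eqP; rewrite -cards_eq0 hX.
    by rewrite -oneE mulr1 mul1r.
  have [i iX] : exists i, i \in X.
    by apply/set0Pn; rewrite -card_gt0 hX.
  have hY : #|X :\ i| = k by move: hX; rewrite (cardsD1 i X) iX add1n => -[].
  have XE : X = symd (X :\ i) [set i].
    apply/setP => j; rewrite /symd !inE.
    case: (eqVneq j i) => [->|nji]; first by rewrite iX.
    by case: (j \in X).
  have h : e (X :\ i) * e [set i] = cc eta (X :\ i) [set i] *: e X by rewrite blM -XE.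
  have -> : e X = (cc eta (X :\ i) [set i])^-1 *: (e (X :\ i) * e [set i]).
    by rewrite h scalerA mulVf ?cc_neq0 ?scale1r.
  rewrite -scalerAr -scalerAl; congr (_ *: _).
  by rewrite mulrA IH // -mulrA hx mulrA.
move=> y; rewrite [y]bl_expand mulr_sumr mulr_suml; apply: eq_bigr => X _.
by rewrite -scalerAr -scalerAl hb.
Qed.

Lemma Prel D i j : i \in D -> j \notin D ->
  \prod_(a in D) (if a == j then (1 : F) else -1) =
  - \prod_(a in D) (if a == i then (1 : F) else -1).
Proof.
move=> iD jD; rewrite (bigD1 i iD) [in RHS](bigD1 i iD) /= eqxx mul1r.
have -> : (i == j) = false by apply/negbTE; apply: contraNneq jD => <-.
rewrite mulN1r; congr (- _); apply: eq_bigr => a /andP [aD ai].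
rewrite (negbTE ai); have -> // : (a == j) = false.
by apply/negbTE; apply: contraNneq jD => <-.
Qed.

Lemma Pfull i : \prod_(a in [set: 'I_n]) (if a == i then (1 : F) else -1) = (-1) ^+ n.-1.
Proof.
rewrite (bigD1 i) ?inE //= eqxx mul1r.
rewrite (eq_bigl (fun a => a \in [set~ i])) => [|a]; last by rewrite !inE.
rewrite (eq_bigr (fun _ => -1)) => [|a]; last by rewrite !inE => /negbTE ->.
by rewrite prodr_const cardsC1 card_ord.
Qed.

Lemma central_coef x D : central x -> x D != 0 ->
  forall i, \prod_(a in D) (if a == i then (1 : F) else -1) = 1.
Proof.
move=> hx hD i.
have h := congr1 (fun z : A => z (symd D [set i])) (hx (e [set i])).
move: h; rewrite /= mul_blE' mul_blE symdA symdd symd0 (symdC D) symdK.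
move/(mulIf hD); rewrite /cc (setIC D) => /(mulIf (ep_neq0 _)) h.
by rewrite -sg_pair h sg_sq.
Qed.

Lemma central_supp x D : central x -> x D != 0 -> D = set0 \/ (D = setT /\ odd n).
Proof.
move=> hx hD; have P1 := central_coef hx hD.
case: (eqVneq D set0) => [->|D0]; first by left.
have [i iD] : exists i, i \in D by apply/set0Pn.
case: (eqVneq D setT) => [DT|DT].
  right; split => //; move: (P1 i); rewrite DT Pfull => /signN1.
  have n0 : (0 < n)%N by apply: leq_ltn_trans (ltn_ord i).
  by rewrite -{2}(prednK n0) /=.
exfalso.
have [j jD] : exists j, j \notin D.
  apply/existsP; move: DT; apply: contraNT; rewrite negb_exists => /forallP h.
  by apply/eqP/setP => a; rewrite inE; move: (h a); rewrite negbK.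
move: (P1 j); rewrite (Prel iD jD) P1 => /eqP.
by rewrite (negbTE N1_neq1).
Qed.

Lemma central_decomp x : (0 < n)%N -> central x -> x = x set0 *: 1 + x setT *: e setT.
Proof.
move=> n0 hx.
have T0 : [set: 'I_n] != set0 by apply/set0Pn; exists (Ordinal n0).
rewrite {1}[x]bl_expand (bigD1 set0) //= (bigD1 setT) //= big1 ?addr0 ?oneE //.
move=> X /andP [X0 XT]; case: (eqVneq (x X) 0) => [->|hX]; first by rewrite scale0r.
by case: (central_supp hx hX) => [E|[E _]]; [move: X0 | move: XT]; rewrite E eqxx.
Qed.

Lemma central_setT x : (0 < n)%N -> central x -> x setT != 0 -> odd n.
Proof.
move=> n0 hx hX; case: (central_supp hx hX) => [E|[]//].
by move: (in_setT (Ordinal n0)); rewrite E inE.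
Qed.

Lemma central_full : odd n -> central (e setT).
Proof.
move=> hn; apply: central_vec => i; rewrite !blM symdC.
congr (_ *: _); rewrite /cc setIC; congr (_ * _).
have h : sg setT [set i] * sg [set i] setT = 1.
  rewrite sg_pair Pfull -signr_odd.
  have n0 : (0 < n)%N by apply: leq_ltn_trans (ltn_ord i).
  by move: hn; rewrite -{1}(prednK n0) /= => /negbTE ->.
by rewrite -[LHS]mulr1 -h mulrA sg_sq mul1r.
Qed.

End S2.

End P4.
Import P4.

Module P5.


Section S2.
Variables (F : numFieldType) (n : nat) (eta : 'I_n -> F).
Hypothesis eta2 : forall i, eta i * eta i = 1.
Local Notation A := (cla eta).
Local Notation e := (bl eta).
Local Notation sg := (sg F).
Implicit Types X Y Z C D : {set 'I_n}.
Implicit Types x y z : A.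
Implicit Types i j : 'I_n.

Local Notation I := (e setT).
Local Notation rev := P3.rev.
Implicit Types v w : A.

Definition ss := cc eta setT setT.
Lemma II : I * I = ss *: 1. Proof. by rewrite blM symdd oneE. Qed.
Definition pI (a b : F) : A := a *: 1 + b *: I.

Lemma pI_mul a b c d : pI a b * pI c d = pI (a * c + b * d * ss) (a * d + b * c).
Proof.
rewrite /pI !mulrDl !mulrDr -!scalerAl -!scalerAr !mul1r !mulr1 II !scalerA.
by rewrite !scalerDl [(b * c) *: I + _]addrC addrACA.
Qed.

Lemma pIC a b c d : pI a b * pI c d = pI c d * pI a b.
Proof. rewrite !pI_mul; congr pI; ring. Qed.

Lemma pI1 : pI 1 0 = 1 :> A. Proof. by rewrite /pI scale1r scale0r addr0. Qed.

Lemma central_mul x y : central x -> central y -> central (x * y).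
Proof. by move=> hx hy z; rewrite -mulrA hy mulrA hx mulrA. Qed.
Lemma central_add x y : central x -> central y -> central (x + y).
Proof. by move=> hx hy z; rewrite mulrDl mulrDr hx hy. Qed.
Lemma central_scale a x : central x -> central (a *: x).
Proof. by move=> hx z; rewrite -scalerAl -scalerAr hx. Qed.
Lemma central1 : central (1 : A).
Proof. by move=> z; rewrite mul1r mulr1. Qed.
Lemma central_inv x y : central x -> y * x = 1 -> x * y = 1 -> central y.
Proof.
move=> hx h1 h2 z.
by rewrite -[y * z]mulr1 -h2 (mulrA (y * z)) -(mulrA y z x) -hx (mulrA y x z) h1 mul1r.
Qed.
Lemma central_rev x : central x -> central (rev x).
Proof. by move=> hx z; rewrite -[z]rev_rev -rev_mul -hx rev_mul. Qed.

Lemma vec_rev v : grade 1 v -> rev v = v.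
Proof.
move=> hv; apply/ffunP => C; rewrite ffunE.
case: (eqVneq #|C| 1%N) => [->|h]; first by rewrite mul1r.
by rewrite (hv C h) mulr0.
Qed.

Lemma vec_par v : grade 1 v -> par true v.
Proof. by move=> hv C hC; apply: hv; apply: contraNneq hC => ->. Qed.

Lemma vec_e i : grade 1 (e [set i]).
Proof.
move=> C hC; rewrite ffunE; case: eqP => // E.
by move: hC; rewrite E cards1 eqxx.
Qed.

Lemma par_e X : par (odd #|X|) (e X).
Proof. by move=> C hC; rewrite ffunE; case: eqP => // E; move: hC; rewrite E eqxx. Qed.

Lemma cc_e X : e X * e X = cc eta X X *: 1.
Proof. by rewrite blM symdd oneE. Qed.

End S2.

End P5.
Import P5.

Module P6.


Section S2.
Variables (F : numFieldType) (n : nat) (eta : 'I_n -> F).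
Hypothesis eta2 : forall i, eta i * eta i = 1.
Local Notation A := (cla eta).
Local Notation e := (bl eta).
Local Notation sg := (sg F).
Implicit Types X Y Z C D : {set 'I_n}.
Implicit Types x y z : A.
Implicit Types i j : 'I_n.

Local Notation I := (e setT).
Local Notation rev := P3.rev.
Implicit Types v w : A.

Definition cunitR x := exists y, x * y = 1 /\ y * x = 1.
Definition GammaR T := exists U, (T * U = 1 /\ U * T = 1) /\
  forall v, grade 1 v -> grade 1 (T * v * U).
Definition PR T := exists W S, [/\ central W, cunitR W,
  cunitR S /\ (par false S \/ par true S) & T = W * S].
Definition QR T := PR T /\ (central (rev T * T) /\ cunitR (rev T * T)).

Lemma split_eq x0 x1 y0 y1 : par false x0 -> par true x1 -> par false y0 -> par true y1 ->
  x0 + x1 = y0 + y1 -> x0 = y0 /\ x1 = y1.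
Proof.
move=> h0 h1 g0 g1 E.
have D : x0 - y0 = y1 - x1.
  by apply/eqP; rewrite subr_eq addrC addrA -E addrK.
have Z : x0 - y0 = 0.
  apply: par_both; first by apply: par_add => //; apply: par_opp.
  by rewrite D; apply: par_add => //; apply: par_opp.
have e0 : x0 = y0 by apply/eqP; rewrite -subr_eq0 Z.
by split => //; move: E; rewrite e0 => /addrI.
Qed.

Lemma pI_sub a b : 1 - pI eta a b = pI eta (1 - a) (- b).
Proof. by rewrite /pI scalerBl scale1r scaleNr opprD addrA. Qed.

Lemma pI00 : pI eta 0 0 = 0.
Proof. by rewrite /pI !scale0r addr0. Qed.

Lemma pI_inv a b : a * a - b * b * ss eta != 0 ->
  pI eta a b * ((a * a - b * b * ss eta)^-1 *: pI eta a (- b)) = 1 /\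
  ((a * a - b * b * ss eta)^-1 *: pI eta a (- b)) * pI eta a b = 1.
Proof.
move=> hk.
have E : pI eta a b * pI eta a (- b) = (a * a - b * b * ss eta) *: 1.
  rewrite pI_mul.
  have -> : a * - b + b * a = 0 by ring.
  have -> : a * a + b * - b * ss eta = a * a - b * b * ss eta by ring.
  by rewrite /pI scale0r addr0.
split; first by rewrite -scalerAr E scalerA mulVf // scale1r.
by rewrite -scalerAl -pIC E scalerA mulVf // scale1r.
Qed.

Lemma pI_unit a b : a * a - b * b * ss eta != 0 -> cunitR (pI eta a b).
Proof. by move=> hk; eexists; apply: pI_inv. Qed.

Theorem GammaQ T : (0 < n)%N -> GammaR T -> QR T.
Proof.
move=> n0 [U [[TU UT] hG]].
have RR : rev T * rev U = 1 by rewrite -rev_mul UT rev1.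
have hv : forall i, T * e [set i] = (T * e [set i] * U) * T.
  by move=> i; rewrite -mulrA UT mulr1.
have Zc : central (rev T * T).
  apply: (central_vec eta2) => i.
  have h := vec_rev (hG _ (vec_e eta i)).
  rewrite !rev_mul (vec_rev (vec_e eta i)) in h.
  by rewrite -mulrA hv -h !mulrA RR mul1r.
have Zu : cunitR (rev T * T).
  exists (U * rev U); split.
    by rewrite mulrA -(mulrA _ T) TU mulr1 RR.
  by rewrite mulrA -(mulrA U) -rev_mul TU rev1 mulr1 UT.
split => //.
set T0 := evp false T; set T1 := evp true T.
have TE : T = T0 + T1 by apply: evp_split.
have P0 : par false T0 by apply: evp_par.
have P1 : par true T1 by apply: evp_par.
have key : forall i, T0 * e [set i] = (T * e [set i] * U) * T0 /\
                     T1 * e [set i] = (T * e [set i] * U) * T1.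
  move=> i; set phi := T * e [set i] * U.
  have Pphi : par true phi := vec_par (hG _ (vec_e eta i)).
  have Pe : par true (e [set i]) by move: (par_e eta (X := [set i])); rewrite cards1.
  have E : T1 * e [set i] + T0 * e [set i] = phi * T1 + phi * T0.
    by rewrite -mulrDl -mulrDr (addrC T1) -TE; exact: hv.
  have [h1 h0] := split_eq (par_mul P1 Pe) (par_mul P0 Pe) (par_mul Pphi P1) (par_mul Pphi P0) E.
  by split.
set M0 := U * T0; set M1 := U * T1.
have Mc : forall Mj Tj, Mj = U * Tj -> (forall i, Tj * e [set i] = (T * e [set i] * U) * Tj) ->
    central Mj.
  move=> Mj Tj -> hk; apply: (central_vec eta2) => i.
  by rewrite -mulrA hk !mulrA UT mul1r.
have M0c : central M0 by apply: (Mc _ T0) => // i; case: (key i).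
have M1c : central M1 by apply: (Mc _ T1) => // i; case: (key i).
have MS : M0 + M1 = 1 by rewrite -mulrDr -TE.
have T0E : T0 = T * M0 by rewrite mulrA TU mul1r.
have T1E : T1 = T * M1 by rewrite mulrA TU mul1r.
have M0E : M0 = pI eta (M0 set0) (M0 setT) := central_decomp eta2 n0 M0c.
set a := M0 set0 in M0E; set b := M0 setT in M0E.
have M1E : M1 = pI eta (1 - a) (- b) by rewrite -pI_sub -M0E -MS addrC addKr.
have gen : forall Mj Tj Mj', central Mj -> Tj = T * Mj -> Mj * Mj' = 1 -> Mj' * Mj = 1 ->
    (par false Tj \/ par true Tj) -> PR T.
  move=> Mj Tj Mj' Mjc TjE h1 h2 Pj.
  have Mj'c : central Mj' := central_inv Mjc h2 h1.
  exists Mj', Tj; split => //.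
  - by exists Mj.
  - split => //; exists (Mj' * U); split.
      by rewrite TjE -mulrA (mulrA Mj) h1 mul1r TU.
    by rewrite TjE -mulrA (mulrA U) UT mul1r h2.
  - by rewrite Mj'c TjE -mulrA h1 mulr1.
case: (eqVneq (a * a - b * b * ss eta) 0) => hk0; last first.
  have [h1 h2] := pI_inv hk0; rewrite -M0E in h1 h2.
  by apply: (gen M0 T0 _ M0c T0E h1 h2); left.
case: (eqVneq ((1 - a) * (1 - a) - (- b) * (- b) * ss eta) 0) => hk1; last first.
  have [h1 h2] := pI_inv hk1; rewrite -M1E in h1 h2.
  by apply: (gen M1 T1 _ M1c T1E h1 h2); right.
have M01 : M0 * M1 = 0.
  rewrite M0E M1E pI_mul.
  have -> : a * (1 - a) + b * - b * ss eta =
    a * (((1 - a) * (1 - a) - (- b) * (- b) * ss eta) - (a * a - b * b * ss eta)) +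
    (a * a - b * b * ss eta) by ring.
  have -> : a * - b + b * (1 - a) =
    b * (((1 - a) * (1 - a) - (- b) * (- b) * ss eta) - (a * a - b * b * ss eta)) by ring.
  by rewrite hk0 hk1 !subr0 !mulr0 addr0 pI00.
have bn0 : b != 0.
  apply/eqP => b0; move: hk0 hk1; rewrite b0 !mul0r subr0 => /eqP.
  rewrite mulf_eq0 orbb => /eqP a0; rewrite a0 oppr0 addr0 !mul0r subr0 mulr1 => /eqP.
  by rewrite oner_eq0.
have nodd : odd n := central_setT eta2 n0 M0c bn0.
have Jc : central I := central_full eta2 nodd.
have PJ : par true I by move: (par_e eta (X := setT)); rewrite cardsT card_ord nodd.
have sss : ss eta * ss eta = 1 := cc_sq eta2 setT setT.
set J' := ss eta *: I.
have JJ' : I * J' = 1 by rewrite -scalerAr II scalerA sss scale1r.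
have J'J : J' * I = 1 by rewrite -scalerAl II scalerA sss scale1r.
have J'c : central J' := central_scale _ Jc.
have M10 : M1 * M0 = 0 by rewrite -M0c.
have M00 : M0 * M0 = M0.
  by have := congr1 (fun z => M0 * z) MS; rewrite /= mulrDr M01 addr0 mulr1.
have M11 : M1 * M1 = M1.
  by have := congr1 (fun z => M1 * z) MS; rewrite /= mulrDr M10 add0r mulr1.
set W := M0 + M1 * J'; set W2 := M0 + M1 * I.
have Wc : central W by apply: central_add => //; apply: central_mul.
have W2c : central W2 by apply: central_add => //; apply: central_mul.
have WW2 : W * W2 = 1.
  rewrite /W /W2 mulrDl !mulrDr M00 (mulrA M0) M01 mul0r addr0.
  rewrite -(mulrA M1 J' M0) (J'c M0) (mulrA M1 M0) M10 mul0r add0r.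
  by rewrite -(mulrA M1 J') (mulrA J') (J'c M1) -(mulrA M1 J' I) J'J mulr1 M11 MS.
have W2W : W2 * W = 1 by rewrite W2c.
set S := W2 * T.
have SE : S = T0 + T1 * I.
  by rewrite /S /W2 mulrDl T0E T1E (M0c T) -(mulrA M1 I T) (Jc T) (mulrA M1 T I) (M1c T).
exists W, S; split => //.
- by exists W2.
- split; last by left; rewrite SE; apply: par_add => //; apply: (par_mul P1 PJ).
  exists (U * W); split.
    by rewrite /S -mulrA (mulrA T) TU mul1r W2W.
  by rewrite /S -mulrA (mulrA W) WW2 mul1r UT.
- by rewrite /S mulrA WW2 mul1r.
Qed.



End S2.

End P6.
Import P6.

Module P7.


Section S2.
Variables (F : numFieldType) (n : nat) (eta : 'I_n -> F).
Hypothesis eta2 : forall i, eta i * eta i = 1.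
Local Notation A := (cla eta).
Local Notation e := (bl eta).
Local Notation sg := (sg F).
Implicit Types X Y Z C D : {set 'I_n}.
Implicit Types x y z : A.
Implicit Types i j : 'I_n.

Local Notation I := (e setT).
Local Notation rev := P3.rev.
Implicit Types v w T U : A.

Lemma negeq0 (x : F) : - x = x -> x = 0.
Proof.
move=> h; apply/eqP; have : x + x == 0 by rewrite -{1}h addNr.
by rewrite -mulr2n mulrn_eq0.
Qed.

Theorem QGamma T : (0 < n)%N -> (n <= 5)%N -> QR T -> GammaR T.
Proof.
move=> n0 n5 [[W [S [Wc [W' [WW' W'W]] [[S' [SS' S'S]] PS] TE]]] [Zc [Zi [ZZi ZiZ]]]].
have [b Pb] : exists b, par b S by case: PS => h; [exists false | exists true].
set K := rev W * W.
have Kc : central K by apply: central_mul => //; apply: central_rev.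
set K' := W' * rev W'.
have KK' : K * K' = 1.
  by rewrite /K /K' -mulrA (mulrA W) WW' mul1r -rev_mul W'W rev1.
have K'K : K' * K = 1.
  by rewrite /K /K' -mulrA (mulrA (rev W')) -rev_mul WW' rev1 mul1r W'W.
have K'c : central K' := central_inv Kc K'K KK'.
set Y := rev S * S.
have ZE : rev T * T = K * Y.
  by rewrite TE rev_mul -mulrA (mulrA (rev W)) -/K mulrA -(Kc (rev S)) -mulrA.
have YE : Y = K' * (rev T * T) by rewrite ZE mulrA K'K mul1r.
have Yc : central Y by rewrite YE; apply: central_mul.
have YY : Y * (Zi * K) = 1 by rewrite YE -mulrA (mulrA (rev T * T)) ZZi mul1r K'K.
have PY : par false Y by rewrite -(addbb b); apply: par_mul => //; apply: rev_par.
have YT : Y setT = 0.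
  case: (boolP (odd n)) => hn; first by apply: PY; rewrite cardsT card_ord hn.
  by apply/eqP; apply: contraNT hn => h; apply: (central_setT eta2 n0 Yc h).
set y := Y set0.
have Yy : Y = y *: 1 by rewrite {1}(central_decomp eta2 n0 Yc) YT /pI scale0r addr0.
have y0 : y != 0.
  apply/eqP => y0; move: YY; rewrite Yy y0 scale0r mul0r => /eqP.
  by rewrite eq_sym oner_eq0.
have S'E : S' = y^-1 *: rev S.
  by rewrite -[rev S]mulr1 -SS' mulrA -/Y Yy -scalerAl mul1r scalerA mulVf // scale1r.
exists (S' * W'); split.
  by split; [rewrite TE -mulrA (mulrA S) SS' mul1r WW' | rewrite TE -mulrA (mulrA W') W'W mul1r S'S].
move=> v hv.
have XE : T * v * (S' * W') = y^-1 *: (S * v * rev S).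
  rewrite TE -!mulrA Wc !mulrA -(mulrA _ W' W) W'W mulr1 S'E -scalerAr.
  by [].
rewrite XE => C hC; rewrite ffunE scE; apply/eqP; rewrite mulf_eq0; apply/orP; right; apply/eqP.
set X := S * v * rev S.
have PX : par true X.
  have -> : true = b (+) true (+) b by case: b {Pb PS}.
  by apply: par_mul; [apply: par_mul => //; apply: vec_par | apply: rev_par].
have rX : rev X = X by rewrite /X !rev_mul rev_rev (vec_rev hv) mulrA.
have cn : (#|C| <= n)%N by have := subset_leq_card (subsetT C); rewrite cardsT card_ord.
case: (boolP (odd #|C|)) => oC; last by apply: PX; rewrite (negbTE oC).
have hr := congr1 (fun z => z C) rX; rewrite /= ffunE in hr.
case E: #|C| cn oC hC hr => [|[|[|[|[|[|k]]]]]] //= cn _ _ hr.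
- by apply: negeq0; move: hr; have -> : 'C(3, 2) = 3%N by []; rewrite -signr_odd /= expr1 mulN1r.
- have n5' : n = 5%N by apply/eqP; rewrite eqn_leq n5 cn.
  have CT : C = setT by apply/eqP; rewrite eqEcard subsetT cardsT card_ord E n5'.
  have nodd : odd n by rewrite n5'.
  have Ic : central I := central_full eta2 nodd.
  have h1 : (X * I) set0 = cc eta setT setT * X setT by rewrite mul_blE' sym0d.
  have h2 : (X * I) set0 = 0.
    rewrite /X -!mulrA mul0C -!mulrA (Ic S) (mulrA (rev S) S I) -/Y Yy -scalerAl mul1r.
    rewrite -scalerAr ffunE scE mul_blE' sym0d (hv setT) ?mulr0 //.
    by rewrite cardsT card_ord n5'.
  move: h2; rewrite h1 CT => /eqP; rewrite mulf_eq0 (negbTE (cc_neq0 eta2 _ _)) /=.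
  by move/eqP.
- by move: (leq_trans cn n5).
Qed.

End S2.

End P7.
Import P7.

Module P8.


Section S2.
Variables (F : numFieldType) (n : nat) (eta : 'I_n -> F).
Hypothesis eta2 : forall i, eta i * eta i = 1.
Local Notation A := (cla eta).
Local Notation e := (bl eta).
Local Notation sg := (sg F).
Implicit Types X Y Z C D : {set 'I_n}.
Implicit Types x y z : A.
Implicit Types i j : 'I_n.

Local Notation I := (e setT).
Local Notation rev := P3.rev.
Implicit Types v w T U : A.

Lemma scaleE a x (C : {set 'I_n}) : (a *: x) C = a * x C.
Proof. by rewrite ffunE. Qed.

Section Six.
Hypothesis n6 : n = 6%N.

Lemma cardT6 : #|[set: 'I_n]| = 6%N. Proof. by rewrite cardsT card_ord. Qed.

Lemma revI : rev I = - I.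
Proof.
rewrite rev_bl sgXX cardT6.
have -> : 'C(6, 2) = 15%N by [].
by rewrite -signr_odd /= expr1 scaleN1r.
Qed.

Lemma rev_pI a b : rev (pI eta a b) = pI eta a (- b).
Proof. by rewrite /pI revD !revZ rev1 revI scalerN scaleNr. Qed.

Lemma ss_sq : ss eta * ss eta = 1. Proof. exact: cc_sq. Qed.

Lemma k_neq0 : 1 * 1 - 2 * 2 * ss eta != 0.
Proof.
have : ss eta ^+ 2 == 1 by rewrite expr2 ss_sq.
rewrite sqrf_eq1 => /orP [] /eqP ->.
  have -> : (1 * 1 - 2 * 2 * 1 : F) = - 3%:R by ring.
  by rewrite oppr_eq0 pnatr_eq0.
have -> : (1 * 1 - 2 * 2 * -1 : F) = 5%:R by ring.
by rewrite pnatr_eq0.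
Qed.

Lemma par_pI a b : par false (pI eta a b).
Proof.
apply: par_add; apply: par_scale; first exact: par_one.
by move: (par_e eta (X := setT)); rewrite cardT6.
Qed.

Theorem six_counter : exists T, QR T /\ ~ GammaR T.
Proof.
set k := 1 * 1 - 2 * 2 * ss eta.
have hk : k != 0 := k_neq0.
have [TU0 U0T] := pI_inv hk.
set U0 := k^-1 *: pI eta 1 (- 2) in TU0 U0T.
set T := pI eta 1 2.
have RT : rev T * T = k *: 1.
  rewrite rev_pI pI_mul.
  have -> : 1 * 2 + - 2 * 1 = 0 :> F by ring.
  have -> : 1 * 1 + - 2 * 2 * ss eta = k by rewrite /k; ring.
  by rewrite /pI scale0r addr0.
exists T; split.
  split.
    exists 1, T; split.
    - exact: central1.
    - by exists 1; rewrite mulr1.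
    - by split; [exists U0 | left; apply: par_pI].
    - by rewrite mul1r.
  rewrite RT; split; first by apply: central_scale; apply: central1.
  by exists (k^-1 *: 1); split; rewrite -scalerAl mul1r scalerA ?mulVf ?mulfV // scale1r.
move=> [U [[TU UT] hG]].
have UE : U = U0 by rewrite -[U]mul1r -U0T -mulrA TU mulr1.
have n0 : (0 < n)%N by rewrite n6.
set i : 'I_n := Ordinal n0.
set v := e [set i].
have Iv : I * v = - (v * I).
  rewrite /v !blM symdC -scaleNr; apply: scal_eq.
  rewrite /cc setIC -mulNr; congr (_ * _).
  have h : sg setT [set i] * sg [set i] setT = -1.
    by rewrite sg_pair Pfull n6 /= -signr_odd /= expr1.
  by rewrite -[RHS]mul1r -(@sg_sq F n setT [set i]) -mulrA mulrN h opprK mulr1.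
have Tv : T * v = v * rev T.
  rewrite rev_pI /T /pI mulrDl mulrDr -!scalerAl -!scalerAr !mul1r !mulr1 Iv.
  by rewrite scalerN scaleNr.
have hv := hG v (vec_e eta i).
set C := [set: 'I_n] :\ i.
have cC : #|C| = 5%N.
  by move: (cardsD1 i [set: 'I_n]); rewrite cardT6 in_setT /C => -[].
have := hv C; rewrite cC => /(_ isT).
rewrite Tv UE /U0 -scalerAr rev_pI -mulrA pI_mul.
rewrite /pI mulrDr -!scalerAr (mulr1 v) ffunE scE => /eqP; rewrite mulf_eq0 invr_eq0 (negbTE hk) /=.
rewrite ffunE [X in _ + X]ffunE mul_blE' !ffunE !scE.
have -> : symd C setT = [set i].
  apply/setP => j; rewrite /symd /C !inE.
  by case: (j == i).
rewrite eqxx.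
have -> : (C == [set i]) = false.
  by apply/negbTE; apply/eqP => h; move: cC; rewrite h cards1.
rewrite /= mulr0 mulr1 add0r.
rewrite mulr1 mulf_eq0 (negbTE (cc_neq0 eta2 _ _)) orbF.
have -> : (1 * -2 - 2 : F) = - 4%:R by ring.
by rewrite oppr_eq0 pnatr_eq0.
Qed.

End Six.
End S2.

End P8.
Import P8.

Module P9.


Section S2.
Variables (F : numFieldType) (n : nat) (eta : 'I_n -> F).
Hypothesis eta2 : forall i, eta i * eta i = 1.
Local Notation A := (cla eta).
Local Notation e := (bl eta).
Local Notation sg := (sg F).
Implicit Types X Y Z C D : {set 'I_n}.
Implicit Types x y z : A.
Implicit Types i j : 'I_n.

Local Notation I := (e setT).
Local Notation rev := P3.rev.
Implicit Types v w T U : A.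

Lemma GammaE (T : clif F n) : Gamma eta T <-> GammaR (T : A).
Proof. by rewrite /Gamma /GammaR /cinv_of (coneE eta) -(oneE eta). Qed.

Lemma even_parE x : even_part x <-> par false x.
Proof. by split => h C hC; apply: h; move: hC; case: (odd #|C|). Qed.
Lemma odd_parE x : odd_part x <-> par true x.
Proof. by split => h C hC; apply: h; move: hC; case: (odd #|C|). Qed.

Lemma PsetE (T : clif F n) : Pset eta T <-> PR (T : A).
Proof.
rewrite /Pset /PR /cunit /cinv_of (coneE eta) -(oneE eta).
split => -[W [S [h1 h2 [h3 h4] h5]]]; exists W, S; split => //; split => //.
  by case: h4 => h; [left; apply/even_parE | right; apply/odd_parE].
by case: h4 => h; [left; apply/even_parE | right; apply/odd_parE].
Qed.

Lemma QsetE (T : clif F n) : Qset eta T <-> QR (T : A).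
Proof.
rewrite /Qset /QR.
have -> : cunit eta (cmul eta (crev T) T) = cunitR (rev (T : A) * T).
  by rewrite /cunit /cinv_of (coneE eta) -(oneE eta).
split => -[h1 h2]; split => //; by apply/PsetE.
Qed.

End S2.


End P9.
Import P9.

Theorem mainTheorem14 (R : realType) :
  (* real Clifford algebras Cl_{p,q}, n = p + q *)
  (forall p q : nat, (2 <= p + q <= 5)%N ->
     forall T : clif R (p + q),
       Gamma (@eta_pq R p q) T <-> Qset (@eta_pq R p q) T) /\
  (forall p q : nat, (p + q = 6)%N ->
     exists T : clif R (p + q),
       ~ (Gamma (@eta_pq R p q) T <-> Qset (@eta_pq R p q) T)) /\
  (* complex Clifford algebras Cl(C^n) *)
  (forall n : nat, (2 <= n <= 5)%N ->
     forall T : clif R[i] n, Gamma (@eta_C R n) T <-> Qset (@eta_C R n) T) /\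
  (forall n : nat, n = 6%N ->
     exists T : clif R[i] n, ~ (Gamma (@eta_C R n) T <-> Qset (@eta_C R n) T)).
Proof.
have epq : forall p q (i : 'I_(p + q)), @eta_pq R p q i * @eta_pq R p q i = 1.
  by move=> p q i; rewrite /eta_pq; case: ifP; rewrite ?mulr1 ?mulrNN ?mulr1.
have eC : forall n (i : 'I_n), @eta_C R n i * @eta_C R n i = 1.
  by move=> n i; rewrite /eta_C mulr1.
split; [|split; [|split]].
- move=> p q /andP [h2 h5] T; rewrite GammaE QsetE; split.
    by apply: GammaQ => //; apply: leq_trans h2.
  by apply: QGamma => //; apply: leq_trans h2.
- move=> p q h6; have [T [hQ hG]] := six_counter (epq p q) h6.
  by exists T; rewrite GammaE QsetE => -[_ /(_ hQ)].
- move=> n /andP [h2 h5] T; rewrite GammaE QsetE; split.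
    by apply: GammaQ => //; apply: leq_trans h2.
  by apply: QGamma => //; apply: leq_trans h2.
- move=> n h6; have [T [hQ hG]] := six_counter (eC n) h6.
  by exists T; rewrite GammaE QsetE => -[_ /(_ hQ)].
Qed.
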